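(* Let $p_U=(p_1,\dots,p_M)$ be a probability distribution on $\{1,\dots,M\}$ with all $p_i>0$, and let $m$ be a positive integer with $m> -\log_2\min_i p_i$. Let $V$ be uniformly distributed on a set of $2^m$ elements (equivalently, $V=(C_1,\dots,C_m)$ with $C_j$ i.i.d. Bernoulli-$\tfrac12$). Then there exists a map $f$ from the $2^m$ values of $V$ to $\{1,\dots,M\}$ such that $U'=f(V)$ has a distribution $p_{U'}$ with every entry a positive integer multiple of $2^{-m}$ and $$D(p_U\,\|\,p_{U'})=\sum_{i=1}^M p_U(i)\ln\frac{p_U(i)}{p_{U'}(i)}\le M\,2^{-m+1}.$$
   Context: $D(\cdot\|\cdot)$ denotes the Kullback–Leibler divergence, here with the natural logarithm. *)

(* Defs.v *)
From mathcomp Require Import all_boot all_order all_algebra.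
From mathcomp Require Import all_classical all_reals all_analysis.
Set Implicit Arguments. Unset Strict Implicit. Unset Printing Implicit Defensive.
Import Order.TTheory GRing.Theory Num.Theory.
Local Open Scope ring_scope.

Definition log2 {R : realType} (x : R) : R := ln x / ln 2.

(* Minimum of the entries of a distribution p on 'I_M (entries are <= 1,
   so 1 is a neutral starting value for probability vectors). *)
Definition minp {R : realType} {M : nat} (p : 'I_M -> R) : R :=
  \big[Order.min/1]_(i < M) p i.

(* Distribution of U' = f(V) when V is uniform on 'I_(2^m). *)
Definition pushU {R : realType} {M m : nat} (f : 'I_(2 ^ m) -> 'I_M) (i : 'I_M) : R :=
  #|[set v | f v == i]|%:R / (2%:R ^+ m).

Definition KL {R : realType} {M : nat} (p q : 'I_M -> R) : R :=
  \sum_(i < M) p i * ln (p i / q i).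

(* Main.v *)
Require Import Defs.
From mathcomp Require Import all_boot all_order all_algebra.
From mathcomp Require Import all_classical all_reals all_analysis.
From mathcomp Require Import ring lra.
Import Order.TTheory GRing.Theory Num.Theory.
Local Open Scope ring_scope.

Lemma term_bound (R : realType) (N k x : R) : 0 < N -> 1 <= k -> 0 < x -> x < k + 1 ->
  (x / N) * ln ((x / N) / (k / N)) <= 2 / N.
Proof.
move=> hN hk hx hxk.
have hk0 : 0 < k by lra.
have -> : (x / N) / (k / N) = x / k.
  by field; apply/andP; split; rewrite gt_eqF.
have -> : x / N * ln (x / k) = (x * ln (x / k)) / N by rewrite mulrAC.
rewrite ler_pM2r ?invr_gt0 //.
set y := x / k.
have hy0 : 0 < y by rewrite divr_gt0.
have hyk : y * k = x by rewrite /y mulfVK // gt_eqF.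
have hy2 : y < 2 by rewrite /y ltr_pdivrMr //; lra.
have hl : ln y <= y - 1.
  have := @le_ln1Dx R (y - 1); have -> : 1 + (y - 1) = y by ring. apply; lra.
apply: (le_trans (y := x * (y - 1))); first by rewrite ler_pM2l.
nra.
Qed.
Local Close Scope ring_scope.
Lemma count_fl (M : nat) (k : 'I_M -> nat) (a : pred 'I_M) :
  count a (flatten [seq nseq (k i) i | i <- enum 'I_M]) = \sum_(i < M) a i * k i.
Proof.
rewrite count_flatten -map_comp sumnE big_map big_enum /=.
by apply: eq_bigr => i _; rewrite /= count_nseq.
Qed.

Lemma fiber (M N : nat) (i0 : 'I_M) (k : 'I_M -> nat) (hk : \sum_(i < M) k i = N) :
  exists f : 'I_N -> 'I_M, forall i, #|[set v | f v == i]| = k i.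
Proof.
set s := flatten [seq nseq (k i) i | i <- enum 'I_M].
have hs : size s = N.
  by rewrite -(count_predT s) count_fl -hk; apply: eq_bigr => i _; rewrite mul1n.
exists (fun v => nth i0 s v) => i.
rewrite cardsE -sum1_card.
have -> : \sum_(v in [pred v : 'I_N | nth i0 s v == i]) 1 = \sum_(v < N | nth i0 s v == i) 1 by [].
rewrite -(big_mkord (fun v => nth i0 s v == i) (fun _ => 1)) -hs -(big_nth i0 (fun x => x == i) (fun _ => 1)) sum1_count count_fl.
rewrite (bigD1 i) //= eqxx mul1n big1 ?addn0 // => j /negbTE; rewrite eq_sym => ->.
by [].
Qed.

Local Open Scope ring_scope.
Theorem mainTheorem3 (R : realType) (M : nat) (p : 'I_M -> R)
  (hpos : forall i, 0 < p i) (hsum : \sum_(i < M) p i = 1)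
  (m : nat) (hm : (0 < m)%N) (hmin : - log2 (minp p) < m%:R) :
  exists f : 'I_(2 ^ m) -> 'I_M,
    (forall i, exists k : nat, (0 < k)%N /\ pushU (R:=R) f i = k%:R / (2%:R ^+ m)) /\
    KL p (pushU (R:=R) f) <= M%:R * (2%:R ^+ m)^-1 * 2%:R.
Proof.
case: M p hpos hsum hmin => [|M'] p hpos hsum hmin.
  by move: hsum; rewrite big_ord0 => /eqP; rewrite eq_sym oner_eq0.
set Nr : R := 2%:R ^+ m.
have hNr : Nr = (2 ^ m)%:R by rewrite /Nr natrX.
have hN0 : 0 < Nr by rewrite /Nr exprn_gt0.
have hmp0 : 0 < minp p by apply: lt_bigmin => // i _; exact: hpos.
have hln2 : 0 < ln (2 : R) by apply: ln_gt0; lra.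
have hmp : 1 < Nr * minp p.
  move: hmin; rewrite /log2 -mulNr.
  move=> h; have := h; rewrite (ltr_pdivrMr _ _ hln2) -lnV ?posrE // mulr_natl -lnXn //.
  rewrite ltr_ln ?posrE ?invr_gt0 ?exprn_gt0 // => h2.
  by rewrite -(ltr_pM2r hmp0) mulVf ?gt_eqF // in h2.
have hp1 : forall i, 1 < Nr * p i.
  move=> i; apply: (lt_le_trans hmp); rewrite ler_pM2l //; exact: bigmin_le.
pose a i := Num.truncn (Nr * p i).
have ha0 : forall i, (0 < a i)%N by move=> i; rewrite truncn_gt0 ltW.
have hal : forall i, Nr * p i < (a i)%:R + 1.
  by move=> i; rewrite natr1 truncnS_gt.
have hasum : (\sum_i a i <= 2 ^ m)%N.
  rewrite -(ler_nat R) natr_sum -hNr.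
  apply: (le_trans (y := \sum_i Nr * p i)).
    by apply: ler_sum => i _; rewrite truncn_le mulr_ge0 // ltW.
  by rewrite -mulr_sumr hsum mulr1.
pose k i := (a i + (if i == ord0 then 2 ^ m - \sum_j a j else 0))%N.
have hk : \sum_i k i = (2 ^ m)%N.
  rewrite big_split /= -big_mkcond /= big_pred1_eq; exact: subnKC hasum.
have [f hf] := fiber _ _ ord0 _ hk.
have hpu : forall i, pushU (R:=R) f i = (k i)%:R / Nr by move=> i; rewrite /pushU hf.
exists f; split.
  move=> i; exists (k i); split; last exact: hpu.
  by apply: (leq_trans (ha0 i)); rewrite leq_addr.
rewrite /KL.
apply: (le_trans (y := \sum_(i < M'.+1) 2 / Nr)).
  apply: ler_sum => i _.
  have -> : p i = (Nr * p i) / Nr by rewrite [Nr * _]mulrC mulfK // gt_eqF.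
  rewrite hpu.
  apply: term_bound => //.
  - by rewrite ler1n (leq_trans (ha0 i)) // leq_addr.
  - by rewrite mulr_gt0.
  - apply: (lt_le_trans (hal i)); rewrite lerD2r ler_nat leq_addr //.
rewrite big_const_ord iter_addr addr0 -mulr_natl le_eqVlt; apply/orP; left; apply/eqP; ring.
Qed.
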